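(* $$D_{\mathbb{R},3}\ge\frac{12^{2/3}}{5/2}\approx2.096.$$ This is witnessed by the $3$-homogeneous polynomial $P_3:\ell_\infty^6\to\mathbb{R}$, $P_3(x)=(x_1+x_2)(x_3^2+x_3x_4-x_4^2)+(x_1-x_2)(x_5^2+x_5x_6-x_6^2)$, which has $\|P_3\|=5/2$ and twelve nonzero coefficients, all of modulus $1$.
   Context: $\ell_\infty^n$ is $\mathbb{R}^n$ with the sup norm; for a polynomial $P$ on $\ell_\infty^n$, $\|P\|=\sup_{x\in[-1,1]^n}|P(x)|$. $D_{\mathbb{R},m}$ is the smallest constant $D$ such that for every $N$ and every real $m$-homogeneous polynomial $P(x)=\sum_{|\alpha|=m}a_\alpha x^\alpha$ on $\ell_\infty^N$, $\big(\sum_{|\alpha|=m}|a_\alpha|^{\frac{2m}{m+1}}\big)^{\frac{m+1}{2m}}\le D\|P\|$. *)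

(* Defs.v *)
From Stdlib Require Import Reals List.
Import ListNotations.
Open Scope R_scope.

Fixpoint mindices (N m : nat) : list (list nat) :=
  match N with
  | O => match m with O => [[]] | _ => [] end
  | S N' => flat_map (fun k => map (cons k) (mindices N' (m - k))) (seq 0 (S m))
  end.

Fixpoint monom (x : nat -> R) (i : nat) (alpha : list nat) : R :=
  match alpha with
  | [] => 1
  | k :: r => (x i ^ k) * monom x (S i) r
  end.

Definition hpoly (N m : nat) (a : list nat -> R) (x : nat -> R) : R :=
  fold_right Rplus 0 (map (fun al => a al * monom x 0 al) (mindices N m)).

Definition is_sup_norm (N m : nat) (a : list nat -> R) (nrm : R) : Prop :=
  is_lub (fun y => exists x : nat -> R,
             (forall i, (i < N)%nat -> -1 <= x i <= 1) /\ y = Rabs (hpoly N m a x))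
         nrm.

(* t^p for t >= 0, p > 0, with 0^p = 0 (Stdlib's Rpower is junk at 0). *)
Definition rpow (t p : R) : R := if Rle_dec t 0 then 0 else Rpower t p.

Definition coef_norm (N m : nat) (a : list nat -> R) : R :=
  let p := INR (2 * m) / INR (m + 1) in
  rpow (fold_right Rplus 0 (map (fun al => rpow (Rabs (a al)) p) (mindices N m)))
       (/ p).

Definition BH_constant (m : nat) (D : R) : Prop :=
  forall (N : nat) (a : list nat -> R) (nrm : R),
    is_sup_norm N m a nrm -> coef_norm N m a <= D * nrm.

(* Main.v *)
Require Import Defs.
From Stdlib Require Import Reals List Lra Psatz.
Import ListNotations.
Open Scope R_scope.

Fixpoint leqb (l1 l2 : list nat) : bool :=
  match l1, l2 with
  | [], [] => true
  | x :: r, y :: s => Nat.eqb x y && leqb r s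
  | _, _ => false
  end.

Fixpoint lookup (t : list (list nat * R)) (al : list nat) : R :=
  match t with
  | [] => 0
  | (k, v) :: r => if leqb k al then v else lookup r al
  end.

Definition tbl : list (list nat * R) :=
  [ ([1;0;2;0;0;0]%nat, 1); ([1;0;1;1;0;0]%nat, 1); ([1;0;0;2;0;0]%nat, -1);
    ([0;1;2;0;0;0]%nat, 1); ([0;1;1;1;0;0]%nat, 1); ([0;1;0;2;0;0]%nat, -1);
    ([1;0;0;0;2;0]%nat, 1); ([1;0;0;0;1;1]%nat, 1); ([1;0;0;0;0;2]%nat, -1);
    ([0;1;0;0;2;0]%nat, -1); ([0;1;0;0;1;1]%nat, -1); ([0;1;0;0;0;2]%nat, 1) ].

Definition acoef (al : list nat) : R := lookup tbl al.

Definition P3 (x : nat -> R) : R :=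
  (x 0%nat + x 1%nat) * (x 2%nat ^ 2 + x 2%nat * x 3%nat - x 3%nat ^ 2)
  + (x 0%nat - x 1%nat) * (x 4%nat ^ 2 + x 4%nat * x 5%nat - x 5%nat ^ 2).

Lemma hpoly_eq x : hpoly 6 3 acoef x = P3 x.
Proof.
  unfold hpoly, acoef.
  cbv beta iota zeta delta [mindices seq flat_map map app Nat.sub fold_right
    monom lookup leqb Nat.eqb andb tbl].
  unfold P3. ring.
Qed.

Lemma f_bound a b : -1 <= a <= 1 -> -1 <= b <= 1 ->
  Rabs (a ^ 2 + a * b - b ^ 2) <= 5/4.
Proof.
  intros Ha Hb. apply Rabs_le. split.
  - pose proof (pow2_ge_0 (a + b/2)). assert (b*b <= 1) by nra. nra.
  - pose proof (pow2_ge_0 (b - a/2)). assert (a*a <= 1) by nra. nra.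
Qed.

Lemma P3_bound x : (forall i, (i < 6)%nat -> -1 <= x i <= 1) -> Rabs (P3 x) <= 5/2.
Proof.
  intros H. unfold P3.
  pose proof (f_bound (x 2%nat) (x 3%nat) (H 2%nat ltac:(lia)) (H 3%nat ltac:(lia))).
  pose proof (f_bound (x 4%nat) (x 5%nat) (H 4%nat ltac:(lia)) (H 5%nat ltac:(lia))).
  pose proof (H 0%nat ltac:(lia)). pose proof (H 1%nat ltac:(lia)).
  set (u := x 2%nat ^ 2 + x 2%nat * x 3%nat - x 3%nat ^ 2) in *.
  set (v := x 4%nat ^ 2 + x 4%nat * x 5%nat - x 5%nat ^ 2) in *.
  eapply Rle_trans; [apply Rabs_triang|].
  rewrite !Rabs_mult.
  assert (Rabs (x 0%nat + x 1%nat) + Rabs (x 0%nat - x 1%nat) <= 2).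
  { unfold Rabs; repeat destruct Rcase_abs; lra. }
  pose proof (Rabs_pos (x 0%nat + x 1%nat)). pose proof (Rabs_pos (x 0%nat - x 1%nat)).
  pose proof (Rabs_pos u). pose proof (Rabs_pos v).
  nra.
Qed.

Definition xw (i : nat) : R :=
  match i with 0 => 1 | 1 => 0 | 2 => 1 | 3 => 1/2 | 4 => 1 | 5 => 1/2 | _ => 0 end.

Lemma sup_norm : is_sup_norm 6 3 acoef (5/2).
Proof.
  split.
  - intros y [x [Hx ->]]. rewrite hpoly_eq. now apply P3_bound.
  - intros b Hb. apply Hb. exists xw. split.
    + intros i Hi. destruct i as [|[|[|[|[|[|i]]]]]]; simpl; lra.
    + rewrite hpoly_eq. unfold P3, xw. rewrite Rabs_right; [field|]. lra.
Qed.

Lemma rpow0 p : rpow (Rabs 0) p = 0.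
Proof. rewrite Rabs_R0. unfold rpow. destruct Rle_dec; lra. Qed.
Lemma rpow1 p : rpow (Rabs 1) p = 1.
Proof. rewrite Rabs_R1. unfold rpow. destruct Rle_dec; [lra|]. unfold Rpower; rewrite ln_1, Rmult_0_r; apply exp_0. Qed.
Lemma rpowm1 p : rpow (Rabs (-1)) p = 1.
Proof. replace (Rabs (-1)) with (Rabs 1) by (unfold Rabs; repeat destruct Rcase_abs; lra). apply rpow1. Qed.

Lemma coef_eq : coef_norm 6 3 acoef = Rpower 12 (2/3).
Proof.
  unfold coef_norm, acoef.
  cbv beta iota zeta delta [mindices seq flat_map map app Nat.sub fold_right
    lookup leqb Nat.eqb andb tbl].
  rewrite ?rpow0, ?rpow1, ?rpowm1.
  unfold rpow. destruct Rle_dec as [h|h].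
  - exfalso. lra.
  - f_equal; [lra|]. simpl. field.
Qed.

Theorem mainTheorem8 :
  forall D : R, BH_constant 3 D -> Rpower 12 (2 / 3) / (5 / 2) <= D.
Proof.
  intros D HD.
  pose proof (HD 6%nat acoef (5/2) sup_norm) as H.
  rewrite coef_eq in H.
  apply (Rmult_le_reg_r (5/2)); [lra|].
  unfold Rdiv at 1. rewrite Rmult_assoc, Rinv_l; lra.
Qed.
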